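(* Let $\mathcal{T}$ be a tiling of $\mathbb{R}^d$ that is repetitive, has finite local complexity and has the Meyer property. Then for every finite $\mathcal{T}$-legal patch $\mathcal{P}$ and every $n>0$ there is $z\in\mathbb{R}^d\setminus\{0\}$ such that $\bigcup_{k=1}^n(\mathcal{P}+kz)$ is $\mathcal{T}$-legal. Moreover, for any unit vector $u$ and any $\delta>0$, $z$ can be chosen with $\|z/\|z\|-u\|<\delta$.
   Context: A tile in $\mathbb{R}^d$ is a compact set equal to the closure of its interior, possibly labeled from a finite set. A patch is a set of tiles with pairwise disjoint interiors; a tiling is a patch whose support is $\mathbb{R}^d$. A patch $\mathcal{P}$ is $\mathcal{T}$-legal if $\mathcal{P}+y\subset\mathcal{T}$ for some $y$. $\mathcal{P}\sqcap S=\{T\in\mathcal{P}:\operatorname{supp}T\cap S\neq\emptyset\}$. $\mathcal{T}$ has finite local complexity if for each compact $K$ the set $\{\mathcal{T}\sqcap(K+x)\}_x$ is finite up to translation, and is repetitive if for every finite $\mathcal{T}$-legal patch $\mathcal{P}$ there is $R>0$ such that every ball of radius $R$ contains the support of some translate $\mathcal{P}+x\subset\mathcal{T}$. $\mathcal{T}$ has the Meyer property if one can choose a point in the support of each tile, with the same relative position for tiles that are translates of each other, such that the resulting set $D$ is a Meyer set: a Delone set with $((D-D)-(D-D))\cap U=\{0\}$ for some neighbourhood $U$ of $0$. *)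

(* Defs.v *)
From HB Require Import structures.
From mathcomp Require Import all_boot all_order all_algebra.
From mathcomp Require Import all_classical all_reals topology normedtype.
Set Implicit Arguments. Unset Strict Implicit. Unset Printing Implicit Defensive.
Import Order.TTheory GRing.Theory Num.Theory.
Import numFieldNormedType.Exports.
Local Open Scope classical_set_scope.
Local Open Scope ring_scope.

Section Tilings.
Variables (R : realType) (d : nat) (L : finType).
Local Notation V := 'rV[R]_d.

Definition enorm (v : V) : R := Num.sqrt (\sum_(i < d) v 0 i ^+ 2).

(** A (labelled) tile: its support together with a label from the finite set L. *)
Definition tileT := (set V * L)%type.

Definition is_tile (t : tileT) : Prop :=
  compact t.1 /\ closure (interior t.1) = t.1.

Definition tile_tr (t : tileT) (y : V) : tileT := ((fun p => p + y) @` t.1, t.2).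

Definition patch_tr (P : set tileT) (y : V) : set tileT :=
  [set tile_tr t y | t in P].

Definition support (P : set tileT) : set V := \bigcup_(t in P) t.1.

Definition is_patch (P : set tileT) : Prop :=
  (forall t, P t -> is_tile t) /\
  (forall t t', P t -> P t' -> t <> t' -> interior t.1 `&` interior t'.1 = set0).

Definition is_tiling (T : set tileT) : Prop := is_patch T /\ support T = setT.

Definition legal (T P : set tileT) : Prop := exists y, patch_tr P y `<=` T.

Definition patch_meet (P : set tileT) (S : set V) : set tileT :=
  [set t | P t /\ t.1 `&` S !=set0].

Definition translate_set (S : set V) (x : V) : set V := (fun p => p + x) @` S.

Definition FLC (T : set tileT) : Prop :=
  forall K : set V, compact K ->
    exists F : set (set tileT), finite_set F /\
      forall x, exists2 P, F P & exists y, patch_meet T (translate_set K x) = patch_tr P y.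

Definition eball (x : V) (r : R) : set V := [set p | enorm (p - x) < r].

Definition repetitive (T : set tileT) : Prop :=
  forall P : set tileT, finite_set P -> legal T P ->
    exists2 r : R, 0 < r & forall x : V, exists y : V,
      patch_tr P y `<=` T /\ support (patch_tr P y) `<=` eball x r.

Definition uniformly_discrete (D : set V) : Prop :=
  exists2 r : R, 0 < r & forall p q, D p -> D q -> p <> q -> r <= enorm (p - q).

Definition relatively_dense (D : set V) : Prop :=
  exists2 r : R, 0 < r & forall x : V, eball x r `&` D !=set0.

Definition Delone (D : set V) : Prop := uniformly_discrete D /\ relatively_dense D.

Definition diffset (A B : set V) : set V := [set a - b | a in A & b in B].

Definition Meyer_set (D : set V) : Prop :=
  Delone D /\
  exists2 U : set V, nbhs (0 : V) U &
    diffset (diffset D D) (diffset D D) `&` U = [set 0].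

Definition Meyer_property (T : set tileT) : Prop :=
  exists c : tileT -> V,
    (forall t, T t -> t.1 (c t)) /\
    (forall t y, T t -> T (tile_tr t y) -> c (tile_tr t y) = c t + y) /\
    Meyer_set (c @` T).

End Tilings.

(* Main.v *)
Require Import Defs.
From HB Require Import structures.
From mathcomp Require Import all_boot all_order all_algebra.
From mathcomp Require Import all_classical all_reals topology normedtype.
From mathcomp Require Import ring lra zify.
Import Order.TTheory GRing.Theory Num.Theory.
Import numFieldNormedType.Exports.
Set Implicit Arguments. Unset Strict Implicit. Unset Printing Implicit Defensive.
Local Open Scope classical_set_scope.
Local Open Scope ring_scope.

Section VdW.
Local Open Scope nat_scope.
Definition mono (C : eqType) (f : nat -> C) k a m := forall j, j < k -> f (a + j * m) = f a.
Definition APin (C : eqType) k W (f : nat -> C) :=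
  exists a m, 0 < m /\ (forall j, j <= k -> a + j * m < W) /\ mono f k a m.
Definition vdW k := forall C : finType, exists W, forall f : nat -> C, APin k W f.

Lemma vdW1 : vdW 1.
Proof. move=> C; exists 2 => f; exists 0, 1; split=> //; split.
  by move=> j; rewrite muln1 add0n ltnS.
by move=> j; rewrite ltnS leqn0 => /eqP->.
Qed.

Section Step.
Variable k : nat.
Hypothesis k_gt0 : 0 < k.
Hypothesis IH : vdW k.
Variable C : finType.

Definition focused (f : nat -> C) s W :=
  exists F (A M : nat -> nat), F < W /\
   (forall i, i < s -> 0 < M i /\ A i + k * M i = F /\ mono f k (A i) (M i)) /\
   (forall i j, i < s -> j < s -> f (A i) = f (A j) -> i = j).

Lemma focusing s : exists W, forall f : nat -> C, APin k.+1 W f \/ focused f s W.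
Proof.
elim: s => [|s [W HW]].
  by exists 1 => f; right; exists 0, (fun _ => 0), (fun _ => 0).
pose M0 := W.*2.
have [W' HW'] := IH {ffun 'I_M0 -> C}.
exists (W' * M0) => f.
pose g b := [ffun i : 'I_M0 => f (b * M0 + i)].
have [b0 [B [B0 [Bbd Bmono]]]] := HW' g.
have blk : forall j x, j < k -> x < M0 -> f ((b0 + j * B) * M0 + x) = f (b0 * M0 + x).
  move=> j x jk xM; have := Bmono j jk => /(congr1 (fun h : {ffun 'I_M0 -> C} => h (Ordinal xM))).
  by rewrite !ffunE.
have b0W : b0 < W' by have := Bbd 0 (leq0n _); rewrite mul0n addn0.
have kBW : b0 + k * B < W' by apply: Bbd.
have WM0 : W <= M0 by rewrite /M0 -addnn leq_addr.
have bM : forall x, x < M0 -> b0 * M0 + x < W' * M0.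
  move=> x xM; apply: (@leq_trans ((b0 + 1) * M0)); first by rewrite mulnDl mul1n ltn_add2l.
  by rewrite leq_mul2r addn1 b0W orbT.
have [HA|[F [A [Mf [FW [HF Hinj]]]]]] := HW (fun x => f (b0 * M0 + x)).
  left; case: HA => a [m [m0 [abd amono]]]; exists (b0 * M0 + a), m; split=> //; split.
    move=> j jk; rewrite -addnA; apply: bM; exact: leq_trans (abd j jk) WM0.
  by move=> j jk; rewrite -addnA amono.
have [[i [iS Fi]]|nFi] := pselect (exists i, i < s /\ f (b0 * M0 + F) = f (b0 * M0 + A i)).
  left; exists (b0 * M0 + A i), (Mf i).
  have [M0i [AF Amono]] := HF i iS.
  have MF : Mf i <= F by rewrite -AF; apply: (leq_trans _ (leq_addl _ _)); rewrite leq_pmull.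
  split=> //; split.
    move=> j jk; rewrite -addnA; apply: bM.
    apply: (@leq_ltn_trans (A i + k.+1 * Mf i)); first by rewrite leq_add2l leq_mul2r jk orbT.
    rewrite mulSn addnCA AF; apply: (@leq_ltn_trans (F + F)); first by rewrite leq_add2r.
    by rewrite addnn /M0 ltn_double.
  move=> j; rewrite ltnS leq_eqVlt => /orP [/eqP->|jk]; last by rewrite -addnA Amono.
  by rewrite -addnA AF.
right.
exists ((b0 + k * B) * M0 + F).
exists (fun i => if i < s then b0 * M0 + A i else b0 * M0 + F).
exists (fun i => if i < s then Mf i + B * M0 else B * M0).
split.
  apply: (@leq_trans ((b0 + k * B).+1 * M0)); first by rewrite mulSn addnC ltn_add2r (leq_trans FW).
  by rewrite leq_mul2r kBW orbT.
split.
  move=> i; rewrite ltnS leq_eqVlt => /orP [/eqP->|iS].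
    rewrite ltnn; split; first by rewrite muln_gt0 B0 /M0 double_gt0 (leq_ltn_trans _ FW).
    split; first by rewrite mulnDl mulnA; lia.
    move=> j jk.
    have -> : b0 * M0 + F + j * (B * M0) = (b0 + j * B) * M0 + F by rewrite mulnDl mulnA; lia.
    by rewrite (blk j F jk (leq_trans FW WM0)).
  rewrite iS; have [M0i [AF Amono]] := HF i iS.
  have MF : Mf i <= F by rewrite -AF; apply: (leq_trans _ (leq_addl _ _)); rewrite leq_pmull.
  split; first by rewrite addn_gt0 M0i.
  split; first by rewrite -AF mulnDr mulnDl mulnA; lia.
  move=> j jk.
  have -> : b0 * M0 + A i + j * (Mf i + B * M0) = (b0 + j * B) * M0 + (A i + j * Mf i).
    by rewrite mulnDr mulnDl mulnA; lia.
  rewrite (blk j _ jk); first exact: (Amono j jk).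
  apply: (@leq_ltn_trans F); last exact: (leq_trans FW WM0).
  by rewrite -AF leq_add2l leq_mul2r (ltnW jk) orbT.
move=> i j Hi Hj.
have [->|iS] : i = s \/ i < s by lia.
all: have [->|jS] : j = s \/ j < s by lia.
- by [].
- rewrite ltnn jS => E; exfalso; apply: nFi; exists j; split; [exact: jS | exact: E].
- rewrite ltnn iS => E; exfalso; apply: nFi; exists i; split; [exact: iS | exact: esym E].
- rewrite iS jS; exact: Hinj.
Qed.

End Step.

Lemma vdW_step k : 0 < k -> vdW k -> vdW k.+1.
Proof.
move=> k0 IH C.
have [W HW] := focusing k0 IH C #|C|.+1.
exists W => f; have [//|[F [A [M [_ [_ Hinj]]]]]] := HW f.
pose h (i : 'I_#|C|.+1) := f (A i).
have : injective h by move=> i j /Hinj E; apply: val_inj; apply: E.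
by move/leq_card; rewrite card_ord ltnn.
Qed.

Lemma vdW_all k : vdW k.+1.
Proof. elim: k => [|k IH]; [exact: vdW1 | exact: vdW_step]. Qed.

End VdW.

Lemma nbhs_rV (R : realType) d (U : set 'rV[R]_d) : nbhs (0 : 'rV[R]_d) U ->
  exists2 e : R, 0 < e & forall v : 'rV[R]_d, (forall j, `|v 0 j| < e) -> U v.
Proof.
move=> /nbhs_ballP [e e0 He]; exists e => // v Hv; apply: He.
split => // i j; rewrite (ord1 i) /ball /= mxE sub0r normrN; exact: Hv.
Qed.

Section Alg.
Variables (R : realType) (d : nat).

Lemma enorm_sq (v : 'rV[R]_d) : enorm v ^+ 2 = \sum_(i < d) v 0 i ^+ 2.
Proof. by rewrite /enorm sqr_sqrtr // sumr_ge0 // => i _; rewrite sqr_ge0. Qed.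

Lemma enorm_ge0 (v : 'rV[R]_d) : 0 <= enorm v.
Proof. exact: sqrtr_ge0. Qed.

Lemma coord_le_enorm (v : 'rV[R]_d) j : `|v 0 j| <= enorm v.
Proof.
rewrite -(ger0_norm (enorm_ge0 v)) -ler_sqr ?nnegrE ?normr_ge0 // !real_normK ?num_real //.
rewrite enorm_sq (bigD1 j) //= lerDl sumr_ge0 // => i _; exact: sqr_ge0.
Qed.

Lemma dir_bound (u eta : 'rV[R]_d) (a eps delta : R) :
  enorm u = 1 -> 0 < delta -> 0 < eps -> (forall j, `|eta 0 j| < eps) ->
  4 * d%:R * eps <= a -> 8 * d%:R * eps ^+ 2 < delta ^+ 2 * a ^+ 2 ->
  a *: u + eta <> 0 /\ enorm ((enorm (a *: u + eta))^-1 *: (a *: u + eta) - u) < delta.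
Proof.
move=> hu hd he heta ha hda.
set z := a *: u + eta.
have hu2 : \sum_(i < d) u 0 i ^+ 2 = 1 by rewrite -enorm_sq hu expr1n.
have hu1 : forall j, `|u 0 j| <= 1 by move=> j; rewrite -hu coord_le_enorm.
set X := \sum_(i < d) eta 0 i * u 0 i.
set Y := \sum_(i < d) eta 0 i ^+ 2.
have hX : `|X| <= d%:R * eps.
  apply: (le_trans (ler_norm_sum _ _ _)).
  have -> : d%:R * eps = \sum_(i < d) eps by rewrite sumr_const card_ord mulr_natl.
  apply: ler_sum => i _; rewrite normrM -[eps]mulr1.
  by apply: ler_pM; rewrite ?normr_ge0 ?(ltW (heta i)) ?hu1.
have hY0 : 0 <= Y by rewrite sumr_ge0 // => i _; exact: sqr_ge0.
have hY : Y <= d%:R * eps ^+ 2.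
  have -> : d%:R * eps ^+ 2 = \sum_(i < d) eps ^+ 2 by rewrite sumr_const card_ord mulr_natl.
  apply: ler_sum => i _; rewrite -real_normK ?num_real // lerXn2r ?nnegrE ?normr_ge0 ?(ltW he) //.
  exact: ltW.
have hN2 : enorm z ^+ 2 = a ^+ 2 + 2 * a * X + Y.
  rewrite enorm_sq /z.
  under eq_bigr => i _ do rewrite !mxE.
  have -> : \sum_(i < d) (a * u 0 i + eta 0 i) ^+ 2 =
     \sum_(i < d) (a ^+ 2 * u 0 i ^+ 2 + 2 * a * (eta 0 i * u 0 i) + eta 0 i ^+ 2).
    by apply: eq_bigr => i _; ring.
  by rewrite !big_split /= -!mulr_sumr hu2 mulr1.
have hS : \sum_(i < d) z 0 i * u 0 i = a + X.
  rewrite /z.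
  under eq_bigr => i _ do rewrite !mxE.
  have -> : \sum_(i < d) (a * u 0 i + eta 0 i) * u 0 i =
     \sum_(i < d) (a * u 0 i ^+ 2 + eta 0 i * u 0 i).
    by apply: eq_bigr => i _; ring.
  by rewrite big_split /= -mulr_sumr hu2 mulr1.
have hd0 : 0 <= d%:R :> R by rewrite ler0n.
have [hXl hXr] : - (d%:R * eps) <= X /\ X <= d%:R * eps by move: hX; rewrite ler_norml => /andP.
have ha0 : 0 < a.
  have a0 : 0 <= a by apply: le_trans ha; rewrite !mulr_ge0 // ltW.
  rewrite lt0r a0 andbT; apply/negP => /eqP a0'; move: hda; rewrite a0' expr0n /= mulr0.
  by apply/negP; rewrite -leNgt !mulr_ge0 // ?sqr_ge0 // ltW.
set N := enorm z.
have N0 : 0 <= N := enorm_ge0 z.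
have hNa : a / 2 <= N.
  have : a ^+ 2 / 4 <= N ^+ 2 by rewrite hN2; nra.
  nra.
have Npos : 0 < N by apply: lt_le_trans hNa; lra.
split.
  move=> z0; move: Npos; rewrite /N z0 /enorm.
  under eq_bigr => i _ do rewrite mxE expr0n /=.
  by rewrite big1 // sqrtr0 ltxx.
have hv : enorm (N^-1 *: z - u) ^+ 2 = 2 - 2 * (a + X) / N.
  rewrite enorm_sq.
  under eq_bigr => i _ do rewrite !mxE.
  have -> : \sum_(i < d) (N^-1 * (a * u 0 i + eta 0 i) - u 0 i) ^+ 2 =
     \sum_(i < d) (N^-1 ^+ 2 * (a * u 0 i + eta 0 i) ^+ 2 - 2 * N^-1 * ((a * u 0 i + eta 0 i) * u 0 i) + u 0 i ^+ 2).
    by apply: eq_bigr => i _; ring.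
  rewrite !big_split /= -!mulr_sumr sumrN -mulr_sumr.
  have hS' : \sum_(i < d) (a * u 0 i + eta 0 i) * u 0 i = a + X.
    by rewrite -hS; apply: eq_bigr => i _; rewrite !mxE.
  have hZ : \sum_(i < d) (a * u 0 i + eta 0 i) ^+ 2 = N ^+ 2.
    by rewrite /N enorm_sq; apply: eq_bigr => i _; rewrite !mxE.
  rewrite hS' hu2 hZ.
  field; lra.
have hlt : enorm (N^-1 *: z - u) ^+ 2 < delta ^+ 2.
  rewrite hv.
  have hNS : N ^+ 2 - (a + X) ^+ 2 <= d%:R * eps ^+ 2 by rewrite hN2; nra.
  have S0 : 0 < a + X by nra.
  have -> : 2 - 2 * (a + X) / N = (2 * N - 2 * (a + X)) / N by field; lra.
  rewrite ltr_pdivrMr //.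
  have hN2a : a ^+ 2 / 4 <= N ^+ 2 by nra.
  have h1 : delta ^+ 2 * (a ^+ 2 / 4) <= delta ^+ 2 * N ^+ 2.
    by rewrite ler_wpM2l // sqr_ge0.
  rewrite ltNge; apply/negP => H.
  have h2 : delta ^+ 2 * N * (N + (a + X)) <= (2 * N - 2 * (a + X)) * (N + (a + X)).
    by rewrite ler_wpM2r //; lra.
  have h3 : delta ^+ 2 * N ^+ 2 <= delta ^+ 2 * N * (N + (a + X)).
    rewrite -mulrA ler_wpM2l ?sqr_ge0 // expr2 ler_wpM2l //; lra.
  nra.
have v0 := enorm_ge0 (N^-1 *: z - u).
nra.
Qed.
End Alg.
Section Tiles.
Variables (R : realType) (d : nat) (L : finType).

Lemma tile_tr_comp (t : tileT R d L) a b : tile_tr (tile_tr t a) b = tile_tr t (a + b).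
Proof.
rewrite /tile_tr /=; congr (_, _); apply/seteqP; split => p.
  by case=> q [x Sx <-] <-; exists x => //; rewrite addrA.
by case=> x Sx <-; exists (x + a); [by exists x | rewrite addrA].
Qed.

Lemma legal_union (T P : set (tileT R d L)) (K : set nat) (z y : 'rV[R]_d) :
  (forall k, K k -> patch_tr P (k%:R *: z + y) `<=` T) ->
  legal T (\bigcup_(k in K) patch_tr P (k%:R *: z)).
Proof.
move=> H; exists y => _ [t [k Kk [t0 Pt0 <-]] <-].
rewrite tile_tr_comp; apply: (H k Kk); exists t0 => //.
Qed.

Lemma trunc_close (x y eps : R) : 0 < eps -> 0 <= x -> 0 <= y ->
  Num.truncn (x / eps) = Num.truncn (y / eps) -> `|x - y| < eps.
Proof.
move=> e0 x0 y0 E.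
have := truncn_itv (divr_ge0 x0 (ltW e0)); have := truncn_itv (divr_ge0 y0 (ltW e0)).
rewrite E => /andP [a1 a2] /andP [b1 b2].
have h : `|x / eps - y / eps| < 1.
  rewrite ltr_norml; apply/andP; split.
    by move: a1 a2 b1 b2; rewrite -natr1; lra.
  by move: a1 a2 b1 b2; rewrite -natr1; lra.
have ie : 0 < eps^-1 by rewrite invr_gt0.
by move: h; rewrite -mulrBl normrM (gtr0_norm ie) ltr_pdivrMr // mul1r.
Qed.

Lemma enorm0 : enorm (0 : 'rV[R]_d) = 0.
Proof.
rewrite /enorm; under eq_bigr => i _ do rewrite mxE expr0n /=.
by rewrite big1 // sqrtr0.
Qed.

Lemma main_dir (T : set (tileT R d L)) : (0 < d)%N -> repetitive T -> Meyer_property T ->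
  forall P : set (tileT R d L), finite_set P -> legal T P ->
  forall n : nat, (0 < n)%N ->
  forall (u : 'rV[R]_d) (delta : R), enorm u = 1 -> 0 < delta ->
       exists z : 'rV[R]_d, z <> 0 /\
         legal T (\bigcup_(k in [set k : nat | (1 <= k <= n)%N]) patch_tr P (k%:R *: z)) /\
         enorm ((enorm z)^-1 *: z - u) < delta.
Proof.
move=> d0 hrep [c [hc1 [hc2 [_ [U hU hUeq]]]]] P Pfin [y0 hy0] n n0 u delta hu hdelta.
have [[t0 Pt0]|P0] := pselect (exists t, P t); last first.
  exists u; split.
    by move=> u0; move: hu; rewrite u0 enorm0 => /eqP; rewrite eq_sym oner_eq0.
  split; last by rewrite hu invr1 scale1r subrr enorm0.
  exists 0 => x [t [k _ [t1 Pt1 _]] _]; exfalso; apply: P0; by exists t1.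
have [rho rho0 hrho] := nbhs_rV hU.
have [r r0 hr] := hrep P Pfin (ex_intro _ y0 hy0).
set q0 := c (tile_tr t0 y0) - y0.
have hq : forall y, patch_tr P y `<=` T -> c (tile_tr t0 y) = q0 + y.
  move=> y hy.
  have e : tile_tr t0 y = tile_tr (tile_tr t0 y0) (y - y0).
    by rewrite tile_tr_comp addrCA subrr addr0.
  rewrite e hc2; last by rewrite -e; apply: hy; exists t0.
    by rewrite /q0 [y + _]addrC addrA.
  by apply: hy0; exists t0.
have hD : forall y, patch_tr P y `<=` T -> (c @` T) (q0 + y).
  move=> y hy; exists (tile_tr t0 y); last exact: hq.
  by apply: hy; exists t0.
have hrig : forall y1 y2 y3 y4, patch_tr P y1 `<=` T -> patch_tr P y2 `<=` T ->
    patch_tr P y3 `<=` T -> patch_tr P y4 `<=` T ->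
    (forall j, `|((y1 - y2) - (y3 - y4)) 0 j| < rho) -> y1 - y2 = y3 - y4.
  move=> y1 y2 y3 y4 h1 h2 h3 h4 hj.
  have hv : (diffset (diffset (c @` T) (c @` T)) (diffset (c @` T) (c @` T)) `&` U)
              ((y1 - y2) - (y3 - y4)).
    split; last exact: hrho.
    exists (y1 - y2).
      exists (q0 + y1); first exact: hD.
      by exists (q0 + y2); [exact: hD | rewrite opprD addrACA subrr add0r].
    exists (y3 - y4) => //.
    exists (q0 + y3); first exact: hD.
    by exists (q0 + y4); [exact: hD | rewrite opprD addrACA subrr add0r].
  by move: hv; rewrite hUeq => /= /eqP; rewrite subr_eq0 => /eqP.
pose eps := rho / 2.
have eps0 : 0 < eps by rewrite /eps divr_gt0.
pose dd : R := d%:R.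
have dd1 : 1 <= dd by rewrite /dd ler1n.
have dd0 : 0 <= dd by rewrite /dd ler0n.
pose s := 4 * dd * eps + 3 * dd * eps / delta + 1.
have s0 : 0 < s.
  have : 0 <= 4 * dd * eps by nra.
  have : 0 <= 3 * dd * eps / delta by apply: divr_ge0; nra.
  rewrite /s; lra.
have hsamp : forall i : nat, exists y, patch_tr P y `<=` T /\
    enorm (q0 + y - (i%:R * s) *: u) < r.
  move=> i; have [y [hy hsup]] := hr ((i%:R * s) *: u); exists y; split => //.
  have hs : Defs.support (patch_tr P y) (c (tile_tr t0 y)).
    exists (tile_tr t0 y); first by exists t0.
    by apply: hc1; apply: hy; exists t0.
  by move: (hsup _ hs); rewrite /eball /= hq.
have [Y HY] := choice hsamp.
pose e := fun i : nat => q0 + Y i - (i%:R * s) *: u.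
have he : forall i j, `|e i 0 j| < r.
  by move=> i j; apply: le_lt_trans (coord_le_enorm _ _) (HY i).2.
have hYe : forall i, Y i = e i + (i%:R * s) *: u - q0.
  by move=> i; apply/rowP => k; rewrite /e !mxE; ring.
pose Nc := Num.truncn (2 * r / eps).
pose col (i : nat) : {ffun 'I_d -> 'I_Nc.+1} :=
  [ffun j => inord (Num.truncn ((e i 0 j + r) / eps))].
have hbd : forall i (j : 'I_d), (Num.truncn (((e i 0 j + r) / eps)%R) < Nc.+1)%N.
  move=> i j; rewrite ltnS truncn_le_nat.
  apply: lt_trans (truncnS_gt _).
  rewrite ltr_pM2r ?invr_gt0 //.
  by have := he i j; rewrite ltr_norml => /andP [_ h]; lra.
have hcol : forall i i' (j : 'I_d), col i = col i' -> `|e i 0 j - e i' 0 j| < eps.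
  move=> i i' j E; have := congr1 (fun f : {ffun 'I_d -> 'I_Nc.+1} => val (f j)) E.
  rewrite /= !ffunE !inordK // => E'.
  have -> : e i 0 j - e i' 0 j = (e i 0 j + r) - (e i' 0 j + r) by ring.
  apply: trunc_close => //.
    by have := he i j; rewrite ltr_norml => /andP [h _]; lra.
  by have := he i' j; rewrite ltr_norml => /andP [h _]; lra.
have [W HW] := vdW_all n {ffun 'I_d -> 'I_Nc.+1}.
have [a [m [m0 [_ hm]]]] := HW col.
pose z := Y ((a + m)%N) - Y a.
have hcolm : col ((a + m)%N) = col a by have := hm 1%N n0; rewrite mul1n.
have hAP : forall j, (j <= n)%N -> Y ((a + j * m)%N) = Y a + j%:R *: z.
  elim => [|j IH] hj; first by rewrite mul0n addn0 scale0r addr0.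
  have IH' := IH (ltnW hj).
  have E : Y ((a + j.+1 * m)%N) - Y ((a + j * m)%N) = Y ((a + m)%N) - Y a.
    apply: hrig; try exact: (HY _).1.
    move=> k.
    have -> : ((Y ((a + j.+1 * m)%N) - Y ((a + j * m)%N)) - (Y ((a + m)%N) - Y a)) 0 k =
       (e ((a + j.+1 * m)%N) 0 k - e ((a + j * m)%N) 0 k) - (e ((a + m)%N) 0 k - e a 0 k).
      rewrite /e mulSn !mxE !natrD !natrM; ring.
    apply: le_lt_trans (ler_normB _ _) _.
    have -> : rho = eps + eps by rewrite /eps; field.
    apply: ltrD; apply: hcol; last exact: hcolm.
    by rewrite (hm j.+1 hj) (hm j (ltnW hj)).
  have -> : Y ((a + j.+1 * m)%N) = Y ((a + j * m)%N) + z by rewrite /z -E addrCA subrr addr0.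
  by rewrite IH' -addrA -{2}(scale1r z) -scalerDl -natr1.
have hz : z = (m%:R * s) *: u + (e ((a + m)%N) - e a).
  by apply/rowP => k; rewrite /z /e !mxE natrD; ring.
have hm1 : 1 <= m%:R :> R by rewrite ler1n.
have [zn0 zdir] : z <> 0 /\ enorm ((enorm z)^-1 *: z - u) < delta.
  rewrite hz; apply: (dir_bound (eps:=eps)) => //.
  - by move=> j; have := hcol _ _ j hcolm; rewrite !mxE.
  - have : 4 * dd * eps <= s.
      have : 0 <= 3 * dd * eps / delta by apply: divr_ge0; nra.
      rewrite /s; lra.
    by move=> h; apply: le_trans h _; rewrite ler_peMl // ltW.
  - have h1 : 3 * dd * eps < delta * s.
      have -> : delta * s = delta * (4 * dd * eps) + 3 * dd * eps + delta.
        by rewrite /s; field; rewrite gt_eqF.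
      have : 0 <= delta * (4 * dd * eps) by apply: mulr_ge0; [exact: ltW | nra].
      lra.
    have h2 : s <= m%:R * s by rewrite ler_peMl // ltW.
    have h3 : 0 <= 3 * dd * eps by nra.
    have h4 : 3 * dd * eps < delta * (m%:R * s).
      by apply: lt_le_trans h1 _; rewrite ler_wpM2l // ltW.
    have h5 : (3 * dd * eps) ^+ 2 < (delta * (m%:R * s)) ^+ 2.
      by rewrite ltrXn2r // (le_lt_trans h3 h4).
    rewrite -exprMn; apply: le_lt_trans h5.
    have : 0 <= dd * eps ^+ 2 by nra.
    nra.
exists z; split => //; split => //.
apply: (legal_union (y := Y a)) => k /andP [k1 kn].
by rewrite addrC -hAP //; exact: (HY _).1.
Qed.
End Tiles.

Lemma enorm_delta (R : realType) d (j0 : 'I_d) : enorm (delta_mx 0 j0 : 'rV[R]_d) = 1.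
Proof.
rewrite /enorm (bigD1 j0) //= big1 ?mxE ?eqxx ?addr0 ?expr1n ?sqrtr1 //.
by move=> j /negbTE jn; rewrite mxE jn andbF expr0n.
Qed.

Unset Implicit Arguments.

Theorem corollary2p11 (R : realType) (d : nat) (L : finType)
  (T : set (tileT R d L)) :
  (0 < d)%N ->
  is_tiling T -> repetitive T -> FLC T -> Meyer_property T ->
  forall P : set (tileT R d L), finite_set P -> legal T P ->
  forall n : nat, (0 < n)%N ->
    (exists z : 'rV[R]_d, z <> 0 /\
       legal T (\bigcup_(k in [set k : nat | (1 <= k <= n)%N]) patch_tr P (k%:R *: z)))
    /\
    (forall (u : 'rV[R]_d) (delta : R), enorm u = 1 -> 0 < delta ->
       exists z : 'rV[R]_d, z <> 0 /\
         legal T (\bigcup_(k in [set k : nat | (1 <= k <= n)%N]) patch_tr P (k%:R *: z)) /\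
         enorm ((enorm z)^-1 *: z - u) < delta).
Proof.
move=> d0 _ hrep _ hM P Pfin Pleg n n0.
have H := main_dir d0 hrep hM Pfin Pleg n0.
split => //.
have [z [z0 [hl _]]] := H (delta_mx 0 (Ordinal d0)) 1 (enorm_delta _ _) ltr01.
by exists z.
Qed.
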